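(* Let $\alpha>-1$ and $\beta>0$ be fixed. For every bounded continuous $\Phi:[0,\infty)\to\mathbb{R}$, $\mathcal{R}_{\eta}^{(\alpha,\beta)}(\Phi;x)\to\Phi(x)$ as $\eta\to\infty$, uniformly in $x$ on every compact subset of $[0,\infty)$.
   Context: The generalized Laguerre polynomials are $\mathcal{L}_k^{(\alpha)}(t)=\sum_{i=0}^{k}\frac{(-1)^i}{i!}\binom{k+\alpha}{k-i}t^i$. Put $p_{\eta,k}(x)=e^{-\eta x/2}2^{-\alpha-1}2^{-k}\mathcal{L}_k^{(\alpha)}(-\eta x/2)$ and, for $k\ge1$, $z>0$, $\mathcal{I}_{k,\eta}^{\beta}(z)=\frac{\eta\beta e^{-\eta\beta z}(\eta\beta z)^{k\beta-1}}{\Gamma(k\beta)}$. The operator is $\mathcal{R}_{\eta}^{(\alpha,\beta)}(\Phi;x)=p_{\eta,0}(x)\Phi(0)+\sum_{k=1}^{\infty}p_{\eta,k}(x)\int_0^\infty\mathcal{I}_{k,\eta}^{\beta}(z)\Phi(z)\,dz$, $\eta>0$. *)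

(* Defs.v *)
From Stdlib Require Import Reals Arith.
From Coquelicot Require Import Coquelicot.
Open Scope R_scope.

Fixpoint falling (r : R) (n : nat) : R :=
  match n with
  | O => 1
  | S m => falling r m * (r - INR m)
  end.

Definition gbinom (r : R) (n : nat) : R := falling r n / INR (fact n).

Definition laguerre (alpha : R) (k : nat) (t : R) : R :=
  sum_n (fun i => (-1) ^ i / INR (fact i) * gbinom (INR k + alpha) (k - i) * t ^ i) k.

Definition int0inf (f : R -> R) : R :=
  RInt_gen f (at_right 0) (Rbar_locally p_infty).

Definition Gamma (s : R) : R :=
  int0inf (fun t => Rpower t (s - 1) * exp (- t)).

Definition p_eta (alpha eta : R) (k : nat) (x : R) : R :=
  exp (- eta * x / 2) * Rpower 2 (- alpha - 1) * / 2 ^ k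
  * laguerre alpha k (- eta * x / 2).

Definition I_kernel (beta eta : R) (k : nat) (z : R) : R :=
  eta * beta * exp (- eta * beta * z) * Rpower (eta * beta * z) (INR k * beta - 1)
  / Gamma (INR k * beta).

Definition R_op (alpha beta eta : R) (Phi : R -> R) (x : R) : R :=
  p_eta alpha eta 0 x * Phi 0
  + Series (fun j => p_eta alpha eta (S j) x
                     * int0inf (fun z => I_kernel beta eta (S j) z * Phi z)).

(* Main.v *)
Require Import Defs.
From Stdlib Require Import Reals.
From Coquelicot Require Import Coquelicot.
From Stdlib Require Import Lra Lia Classical_Prop.
Open Scope R_scope.

Lemma falling_peel y n : falling y (S n) = y * falling (y - 1) n.
Proof.
  revert y; induction n as [|n IH]; intro y.
  - simpl. ring.
  - change (falling y (S (S n))) with (falling y (S n) * (y - INR (S n))).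
    change (falling (y - 1) (S n)) with (falling (y-1) n * (y - 1 - INR n)).
    rewrite IH. rewrite S_INR. ring.
Qed.

Lemma falling_pos y n : INR n - 1 < y -> 0 < falling y n.
Proof.
  induction n as [|n IH]; intro H; simpl.
  - lra.
  - rewrite S_INR in H. apply Rmult_lt_0_compat.
    + apply IH. lra.
    + lra.
Qed.

Definition nbc (r : R) (j : nat) : R := gbinom (r + INR j - 1) j.

Lemma nbc_0 r : nbc r 0 = 1.
Proof. unfold nbc, gbinom; simpl. field. Qed.

Lemma nbc_pos r j : 0 < r -> 0 < nbc r j.
Proof.
  intro Hr. unfold nbc, gbinom. apply Rdiv_lt_0_compat.
  - apply falling_pos. lra.
  - apply INR_fact_lt_0.
Qed.

Lemma nbc_rec r j : INR (S j) * nbc r (S j) = (r + INR j) * nbc r j.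
Proof.
  unfold nbc, gbinom. rewrite falling_peel.
  replace (r + INR (S j) - 1 - 1) with (r + INR j - 1) by (rewrite S_INR; ring).
  replace (r + INR (S j) - 1) with (r + INR j) by (rewrite S_INR; ring).
  rewrite fact_simpl, mult_INR.
  assert (INR (Factorial.fact j) <> 0) by (apply INR_fact_neq_0).
  assert (INR (S j) <> 0) by (apply not_0_INR; lia).
  field. split; auto.
Qed.

Lemma nbc_shift r j : INR (S j) * nbc r (S j) = r * nbc (r + 1) j.
Proof.
  unfold nbc, gbinom.
  replace (r + INR (S j) - 1) with (r + 1 + INR j - 1) by (rewrite S_INR; ring).
  change (falling (r + 1 + INR j - 1) (S j)) with
    (falling (r + 1 + INR j - 1) j * (r + 1 + INR j - 1 - INR j)).
  rewrite fact_simpl, mult_INR.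
  assert (INR (Factorial.fact j) <> 0) by (apply INR_fact_neq_0).
  assert (INR (S j) <> 0) by (apply not_0_INR; lia).
  replace (r + 1 + INR j - 1 - INR j) with r by ring.
  field. split; auto.
Qed.

Definition SN r w N := sum_n (fun j => nbc r j * w ^ j) N.
Definition DN r w N := sum_n (fun j => INR j * nbc r j * w ^ (pred j)) N.

Lemma SN_derive r w N : is_derive (fun w => SN r w N) w (DN r w N).
Proof.
  unfold SN, DN. induction N as [|N IH].
  - rewrite !sum_O. simpl.
    replace (0 * nbc r 0 * 1) with 0 by ring.
    apply (is_derive_ext (fun _ => nbc r 0 * 1)).
    { intro t. rewrite sum_O. simpl. ring. }
    exact (is_derive_const (V:=R_NormedModule) (nbc r 0 * 1) w).
  - apply (is_derive_ext (fun w => sum_n (fun j => nbc r j * w ^ j) N + nbc r (S N) * w ^ (S N))).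
    { intro t. rewrite sum_Sn. reflexivity. }
    rewrite sum_Sn. change plus with Rplus.
    refine (is_derive_plus (V:=R_NormedModule) _ _ _ _ _ IH _).
    replace (INR (S N) * nbc r (S N) * w ^ pred (S N)) with
      (nbc r (S N) * (INR (S N) * 1 * w ^ pred (S N))) by ring.
    refine (is_derive_scal (fun w => w ^ S N) _ _ _ _).
    auto_derive; [exact I|]. simpl. ring.
Qed.

Lemma tele r w N : (1 - w) * DN r w N - r * SN r w N = - ((r + INR N) * nbc r N * w ^ N).
Proof.
  unfold SN, DN. induction N as [|N IH].
  - rewrite !sum_O. rewrite nbc_0. simpl. ring.
  - rewrite !sum_Sn. change plus with Rplus.
    replace ((1 - w) * (sum_n (fun j => INR j * nbc r j * w ^ pred j) N +
       INR (S N) * nbc r (S N) * w ^ pred (S N)) -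
      r * (sum_n (fun j => nbc r j * w ^ j) N + nbc r (S N) * w ^ S N))
    with (((1 - w) * sum_n (fun j => INR j * nbc r j * w ^ pred j) N -
       r * sum_n (fun j => nbc r j * w ^ j) N) +
       ((1-w) * (INR (S N) * nbc r (S N)) * w ^ pred (S N) - r * nbc r (S N) * w ^ S N)) by ring.
    rewrite IH. simpl pred.
    replace ((r + INR N) * nbc r N * w ^ N) with (INR (S N) * nbc r (S N) * w ^ N)
      by (rewrite nbc_rec; ring).
    simpl pow. rewrite !S_INR. ring.
Qed.

Lemma exp_mono x y : x <= y -> exp x <= exp y.
Proof.
  intro H. destruct (Rle_lt_or_eq_dec _ _ H) as [H1|H1].
  - left. apply exp_increasing. exact H1.
  - subst. lra.
Qed.

Definition gN r N w := exp (r * ln (1 - w)) * SN r w N.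

Lemma gN_derive r N w : w < 1 ->
  is_derive (gN r N) w (exp (r * ln (1 - w)) / (1 - w) * (- ((r + INR N) * nbc r N * w ^ N))).
Proof.
  intro Hw. unfold gN.
  assert (H := SN_derive r w N).
  rewrite <- tele.
  evar (d : R).
  assert (Hd : is_derive (fun w => exp (r * ln (1 - w))) w d).
  { auto_derive. lra. unfold d. reflexivity. }
  apply (is_derive_ext (fun w => exp (r * ln (1 - w)) * SN r w N)). { intro; reflexivity. }
  replace (exp (r * ln (1 - w)) / (1 - w) * ((1 - w) * DN r w N - r * SN r w N))
    with (d * SN r w N + exp (r * ln (1 - w)) * DN r w N).
  - apply (is_derive_mult (fun w => exp (r * ln (1 - w))) (fun w => SN r w N)); auto.
    intros. apply Rmult_comm.
  - unfold d. replace (1 + - w) with (1 - w) by ring. field. lra.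
Qed.

Lemma SN_at0 r N : SN r 0 N = 1.
Proof.
  unfold SN. induction N as [|N IH].
  - rewrite sum_O. rewrite nbc_0. simpl. ring.
  - rewrite sum_Sn. change plus with Rplus. rewrite IH. simpl. ring.
Qed.

Lemma gN_bound r N : 0 < r -> Rabs (gN r N (/2) - 1) <= (r + INR N) * nbc r N * (/2)^N.
Proof.
  intro Hr.
  destruct (MVT_gen (gN r N) 0 (/2)
     (fun w => exp (r * ln (1 - w)) / (1 - w) * (- ((r + INR N) * nbc r N * w ^ N))))
    as [c [Hc Heq]].
  - intros x Hx. apply gN_derive.
    assert (Rmax 0 (/2) = /2) by (apply Rmax_right; lra). lra.
  - intros x Hx. apply continuity_pt_filterlim.
    apply (ex_derive_continuous (V:=R_NormedModule)).
    eexists. apply gN_derive.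
    assert (Rmax 0 (/2) = /2) by (apply Rmax_right; lra). lra.
  - rewrite Rmin_left in Hc by lra. rewrite Rmax_right in Hc by lra.
    assert (Hg0 : gN r N 0 = 1).
    { unfold gN. rewrite SN_at0. replace (1 - 0) with 1 by ring. rewrite ln_1.
      rewrite Rmult_0_r, exp_0. ring. }
    rewrite Hg0 in Heq. rewrite Heq.
    assert (Hn := nbc_pos r N Hr).
    assert (HN := pos_INR N).
    assert (He : exp (r * ln (1 - c)) <= 1).
    { apply Rle_trans with (exp 0); [|rewrite exp_0; lra]. apply exp_mono.
      assert (ln (1 - c) <= 0) by (rewrite <- ln_1; apply ln_le; lra).
      nra. }
    assert (Hep : 0 < exp (r * ln (1 - c))) by apply exp_pos.
    assert (Hcp : 0 <= c ^ N) by (apply pow_le; lra).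
    assert (Hcn : c ^ N <= (/2) ^ N) by (apply pow_incr; lra).
    assert (Hh : 0 <= (/2)^N) by (apply pow_le; lra).
    rewrite Rabs_mult. rewrite Rabs_mult. rewrite Rabs_Ropp.
    rewrite (Rabs_pos_eq (/2 - 0)) by lra.
    rewrite Rabs_pos_eq by (apply Rdiv_le_0_compat; lra).
    rewrite Rabs_pos_eq by (apply Rmult_le_pos; [apply Rmult_le_pos|]; lra).
    assert (H2 : exp (r * ln (1 - c)) / (1 - c) <= 2).
    { apply (Rmult_le_reg_r (1 - c)). lra. unfold Rdiv. rewrite Rmult_assoc, Rinv_l by lra. nra. }
    set (A := (r + INR N) * nbc r N).
    assert (0 <= A) by (unfold A; apply Rmult_le_pos; lra).
    assert (0 <= exp (r * ln (1 - c)) / (1 - c)) by (apply Rdiv_le_0_compat; lra).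
    replace (A * (/2)^N) with (2 * (A * (/2)^N) * (/2 - 0)) by field.
    apply Rmult_le_compat_r. lra.
    apply Rmult_le_compat; try lra. apply Rmult_le_pos; lra.
    apply Rmult_le_compat_l; lra.
Qed.

Lemma lim_inv_S : is_lim_seq (fun n => / INR (S n)) 0.
Proof.
  apply (is_lim_seq_incr_1 (fun n => / INR n)).
  replace (Finite 0) with (Rbar_inv p_infty) by reflexivity.
  apply is_lim_seq_inv. apply is_lim_seq_INR. discriminate.
Qed.

Lemma dN_lim r : 0 < r -> is_lim_seq (fun N => (r + INR N) * nbc r N * (/2)^N) 0.
Proof.
  intro Hr. apply ex_series_lim_0. apply ex_series_Rabs.
  apply (ex_series_DAlembert _ (/2)). lra.
  - intro n. assert (H := nbc_pos r n Hr). assert (H2 := pos_INR n).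
    assert (0 < (/2)^n) by (apply pow_lt; lra).
    apply Rgt_not_eq. apply Rmult_lt_0_compat; [apply Rmult_lt_0_compat|]; lra.
  - apply (is_lim_seq_ext (fun n => /2 + r / 2 * / INR (S n))).
    + intro n. assert (H := nbc_pos r n Hr). assert (H2 := pos_INR n).
      assert (H3 := nbc_rec r n).
      assert (HS : INR (S n) <> 0) by (apply not_0_INR; lia).
      assert (Hc : nbc r (S n) = (r + INR n) * nbc r n / INR (S n)).
      { rewrite <- H3. field. exact HS. }
      assert (HSp := nbc_pos r (S n) Hr). assert (H2' := pos_INR (S n)).
      assert (0 < (/2)^n) by (apply pow_lt; lra).
      assert (0 < (/2)^(S n)) by (apply pow_lt; lra).
      rewrite Rabs_pos_eq.
      * rewrite Hc. rewrite S_INR. rewrite S_INR in HS. simpl pow. field. repeat split; lra.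
      * apply Rlt_le. apply Rdiv_lt_0_compat. apply Rmult_lt_0_compat. apply Rmult_lt_0_compat. lra. lra. lra. apply Rmult_lt_0_compat. apply Rmult_lt_0_compat. lra. lra. lra.
    + replace (Finite (/2)) with (Finite (/2 + r / 2 * 0)) by (f_equal; ring).
      refine (is_lim_seq_plus' (fun _ => /2) (fun n => r/2 * / INR (S n)) (/2) (r/2*0) _ _).
      apply is_lim_seq_const.
      apply (is_lim_seq_scal_l _ (r/2) 0). apply lim_inv_S.
Qed.

Lemma nb_series r : 0 < r -> is_series (fun j => nbc r j * (/2)^j) (Rpower 2 r).
Proof.
  intro Hr.
  assert (Hg : is_lim_seq (fun N => gN r N (/2)) 1).
  { apply (is_lim_seq_le_le (fun N => 1 - (r + INR N) * nbc r N * (/2)^N) _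
            (fun N => 1 + (r + INR N) * nbc r N * (/2)^N)).
    - intro N. assert (H := gN_bound r N Hr). apply Rabs_le_between in H. lra.
    - replace (Finite 1) with (Finite (1 - 0)) by (f_equal; ring).
      apply (is_lim_seq_minus' (fun _ => 1)). apply is_lim_seq_const. apply dN_lim; auto.
    - replace (Finite 1) with (Finite (1 + 0)) by (f_equal; ring).
      apply (is_lim_seq_plus' (fun _ => 1)). apply is_lim_seq_const. apply dN_lim; auto. }
  assert (H2 : is_lim_seq (fun N => Rpower 2 r * gN r N (/2)) (Rpower 2 r * 1)).
  { apply (is_lim_seq_scal_l _ (Rpower 2 r) 1). exact Hg. }
  rewrite Rmult_1_r in H2.
  unfold is_series. 
  apply (is_lim_seq_ext _ (sum_n (fun j => nbc r j * (/2)^j))) in H2.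
  - exact H2.
  - intro N. unfold gN, Rpower. fold (SN r (/2) N).
    rewrite <- Rmult_assoc, <- exp_plus.
    replace (1 - /2) with (/2) by field. rewrite ln_Rinv by lra.
    replace (r * ln 2 + r * - ln 2) with 0 by ring. rewrite exp_0. ring.
Qed.

Ltac toR := match goal with |- ?a = ?b => change (@eq R a b) end.

Lemma is_series_plusR (a b : nat -> R) la lb :
  is_series a la -> is_series b lb -> is_series (fun n => a n + b n) (la + lb).
Proof. intros H1 H2. exact (is_series_plus _ _ _ _ H1 H2). Qed.

Lemma is_series_minusR (a b : nat -> R) la lb :
  is_series a la -> is_series b lb -> is_series (fun n => a n - b n) (la - lb).
Proof. intros H1 H2. exact (is_series_minus _ _ _ _ H1 H2). Qed.

Lemma is_series_scalR (c : R) (a : nat -> R) l :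
  is_series a l -> is_series (fun n => c * a n) (c * l).
Proof. intros H. exact (is_series_scal c a l H). Qed.

Lemma is_series_shiftR (a : nat -> R) (l : R) :
  is_series (fun n => a (S n)) l -> is_series a (l + a 0%nat).
Proof.
  intro H. apply is_series_decr_1.
  match goal with |- is_series _ ?x => replace x with l; [exact H|] end.
  unfold plus, opp; simpl. change (l = l + a 0%nat + - a 0%nat). ring.
Qed.

Lemma Rpower_S2 r : Rpower 2 (r + 1) = 2 * Rpower 2 r.
Proof. rewrite Rpower_plus, Rpower_1 by lra. ring. Qed.

Lemma M1_series r : 0 < r ->
  is_series (fun j => INR j * (nbc r j * (/2)^j)) (r * Rpower 2 r).
Proof.
  intro Hr.
  replace (r * Rpower 2 r) with (r / 2 * Rpower 2 (r + 1) + INR 0 * (nbc r 0 * (/2)^0)).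
  2:{ rewrite Rpower_S2. simpl. field. }
  apply is_series_shiftR.
  apply (is_series_ext (fun j => r / 2 * (nbc (r + 1) j * (/2)^j))).
  - intro j. cbv beta. simpl pow.
    replace (INR (S j) * (nbc r (S j) * (/ 2 * (/ 2) ^ j))) with
      ((INR (S j) * nbc r (S j)) * (/ 2 * (/ 2) ^ j)) by ring.
    rewrite nbc_shift. toR. field.
  - apply is_series_scalR. apply nb_series. lra.
Qed.

Lemma M2_series r : 0 < r ->
  is_series (fun j => INR j * INR j * (nbc r j * (/2)^j)) ((r * r + 2 * r) * Rpower 2 r).
Proof.
  intro Hr.
  replace ((r * r + 2 * r) * Rpower 2 r) with
    (r / 2 * ((r + 1) * Rpower 2 (r + 1) + Rpower 2 (r + 1)) + INR 0 * INR 0 * (nbc r 0 * (/2)^0)).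
  2:{ rewrite Rpower_S2. simpl. field. }
  apply is_series_shiftR.
  apply (is_series_ext (fun j => r / 2 * (INR j * (nbc (r + 1) j * (/2)^j) + nbc (r + 1) j * (/2)^j))).
  - intro j. cbv beta.
    replace (INR (S j) * INR (S j) * (nbc r (S j) * (/ 2) ^ S j)) with
      (INR (S j) * (INR (S j) * nbc r (S j)) * (/ 2) ^ S j) by ring.
    rewrite nbc_shift. rewrite S_INR. simpl pow. toR. field.
  - apply is_series_scalR. apply is_series_plusR.
    + apply M1_series. lra.
    + apply nb_series. lra.
Qed.

Lemma sumR_O (a : nat -> R) : sum_n a 0 = a 0%nat.
Proof. apply sum_O. Qed.

Lemma sumR_Sn (a : nat -> R) n : sum_n a (S n) = sum_n a n + a (S n).
Proof. rewrite sum_Sn. reflexivity. Qed.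

Lemma sum_le_pw (a b : nat -> R) N :
  (forall i, (i <= N)%nat -> a i <= b i) -> sum_n a N <= sum_n b N.
Proof.
  induction N as [|N IH]; intro H.
  - rewrite !sumR_O. apply H. lia.
  - rewrite !sumR_Sn. apply Rplus_le_compat. apply IH. intros; apply H; lia. apply H; lia.
Qed.

Lemma sum_nonneg (a : nat -> R) N : (forall i, (i <= N)%nat -> 0 <= a i) -> 0 <= sum_n a N.
Proof.
  induction N as [|N IH]; intro H.
  - rewrite sumR_O. apply H. lia.
  - rewrite sumR_Sn. apply Rplus_le_le_0_compat. apply IH. intros; apply H; lia. apply H; lia.
Qed.

Lemma sum_mono_N (a : nat -> R) N M : (forall i, 0 <= a i) -> (N <= M)%nat -> sum_n a N <= sum_n a M.
Proof.
  intros Ha HNM. induction HNM as [|M HNM IH].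
  - lra.
  - rewrite sumR_Sn. specialize (Ha (S M)). lra.
Qed.

Lemma sum_plusR (a b : nat -> R) N : sum_n (fun i => a i + b i) N = sum_n a N + sum_n b N.
Proof. exact (sum_n_plus a b N). Qed.

Lemma partial_le_series (a : nat -> R) l N :
  (forall i, 0 <= a i) -> is_series a l -> sum_n a N <= l.
Proof.
  intros Ha Hs.
  assert (H1 : is_lim_seq (fun n => sum_n a (n + N)) l).
  { apply (is_lim_seq_incr_n (sum_n a) N l). exact Hs. }
  assert (H2 := is_lim_seq_le (fun _ => sum_n a N) (fun n => sum_n a (n + N)) (sum_n a N) l).
  simpl in H2. apply H2.
  - intro n. apply sum_mono_N; auto. lia.
  - apply is_lim_seq_const.
  - exact H1.
Qed.

Lemma term_nonneg_series_nonneg (a : nat -> R) l : (forall i, 0 <= a i) -> is_series a l -> 0 <= l.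
Proof.
  intros Ha Hs. apply Rle_trans with (sum_n a 0). rewrite sumR_O. apply Ha.
  apply partial_le_series; auto.
Qed.

Definition Tdiag (F : nat -> nat -> R) N := sum_n (fun i => sum_n (F i) (N - i)) N.

Lemma diag_eq (F : nat -> nat -> R) N :
  sum_n (fun k => sum_n (fun i => F i (k - i)%nat) k) N = Tdiag F N.
Proof.
  unfold Tdiag. induction N as [|N IH].
  - rewrite !sumR_O. simpl. try rewrite sumR_O. reflexivity.
  - rewrite sumR_Sn. rewrite IH. rewrite (sumR_Sn (fun i => sum_n (F i) (S N - i))).
    rewrite (sumR_Sn (fun i => F i (S N - i)%nat)).
    replace (S N - S N)%nat with 0%nat by lia. rewrite sumR_O.
    rewrite (sum_n_ext_loc (fun i => sum_n (F i) (S N - i)) (fun i => sum_n (F i) (N - i) + F i (S N - i)%nat)).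
    + rewrite sum_plusR. toR. ring.
    + intros i Hi. replace (S N - i)%nat with (S (N - i)) by lia. rewrite sumR_Sn. reflexivity.
Qed.

Lemma finite_sum_lim (G : nat -> nat -> R) (r : nat -> R) I :
  (forall i, is_lim_seq (G i) (r i)) ->
  is_lim_seq (fun J => sum_n (fun i => G i J) I) (sum_n r I).
Proof.
  intro H. induction I as [|I IH].
  - rewrite sumR_O. apply (is_lim_seq_ext (G 0%nat)). intro; rewrite sumR_O; reflexivity. apply H.
  - rewrite sumR_Sn. apply (is_lim_seq_ext (fun J => sum_n (fun i => G i J) I + G (S I) J)).
    intro; rewrite sumR_Sn; reflexivity.
    apply is_lim_seq_plus'; auto.
Qed.

Lemma rearr (F : nat -> nat -> R) (r : nat -> R) S :
  (forall i j, 0 <= F i j) -> (forall i, is_series (F i) (r i)) -> is_series r S ->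
  is_series (fun k => sum_n (fun i => F i (k - i)%nat) k) S.
Proof.
  intros HF Hr HS.
  assert (Hrp : forall i, 0 <= r i) by (intro i; apply (term_nonneg_series_nonneg (F i)); auto).
  assert (Hup : forall N, Tdiag F N <= S).
  { intro N. apply Rle_trans with (sum_n r N).
    - unfold Tdiag. apply sum_le_pw. intros i _. apply partial_le_series; auto.
    - apply partial_le_series; auto. }
  assert (Hmono : forall N M, (N <= M)%nat -> Tdiag F N <= Tdiag F M).
  { intros N M H. rewrite <- !diag_eq. apply sum_mono_N; auto.
    intro k. apply sum_nonneg. intros; apply HF. }
  assert (Hlow : forall I J, sum_n (fun i => sum_n (F i) J) I <= Tdiag F (I + J)).
  { intros I J. unfold Tdiag.
    apply Rle_trans with (sum_n (fun i => sum_n (F i) (I + J - i)) I).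
    - apply sum_le_pw. intros i Hi. apply sum_mono_N; auto. lia.
    - apply sum_mono_N. intro i. apply sum_nonneg. intros; apply HF. lia. }
  unfold is_series. change (is_lim_seq (sum_n (fun k => sum_n (fun i => F i (k - i)%nat) k)) S).
  apply (is_lim_seq_ext (Tdiag F)). { intro; symmetry; apply diag_eq. }
  apply is_lim_seq_spec. intro eps.
  assert (HSlim : is_lim_seq (sum_n r) S) by exact HS.
  apply is_lim_seq_spec in HSlim. destruct (HSlim (pos_div_2 eps)) as [I HI].
  specialize (HI I (le_n I)). simpl in HI.
  assert (HG : is_lim_seq (fun J => sum_n (fun i => sum_n (F i) J) I) (sum_n r I)).
  { apply (finite_sum_lim (fun i J => sum_n (F i) J)). intro i. exact (Hr i). }
  apply is_lim_seq_spec in HG. destruct (HG (pos_div_2 eps)) as [J HJ].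
  specialize (HJ J (le_n J)). simpl in HJ.
  exists (I + J)%nat. intros N HN.
  assert (H1 := Hlow I J). assert (H2 := Hmono _ _ HN). assert (H3 := Hup N).
  apply Rabs_lt_between in HI. apply Rabs_lt_between in HJ.
  apply Rabs_lt_between. destruct eps as [e He]. simpl in *. lra.
Qed.

Lemma is_series_eq_lim (a : nat -> R) (l l' : R) : l = l' -> is_series a l -> is_series a l'.
Proof. intros ->; auto. Qed.

Lemma sum_mult_l (c : R) (a : nat -> R) N : c * sum_n a N = sum_n (fun i => c * a i) N.
Proof.
  induction N as [|N IH]. rewrite !sumR_O. reflexivity.
  rewrite !sumR_Sn. rewrite <- IH. ring.
Qed.

Definition Pois s i := exp (- s) * (s ^ i / INR (Factorial.fact i)).

Lemma Pois_nonneg s i : 0 <= s -> 0 <= Pois s i.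
Proof.
  intro Hs. unfold Pois. apply Rmult_le_pos. left; apply exp_pos.
  apply Rdiv_le_0_compat. apply pow_le; lra. apply INR_fact_lt_0.
Qed.

Lemma Pois_shift s i : INR (S i) * Pois s (S i) = s * Pois s i.
Proof.
  unfold Pois. rewrite fact_simpl, mult_INR. simpl pow.
  assert (INR (Factorial.fact i) <> 0) by apply INR_fact_neq_0.
  assert (INR (S i) <> 0) by (apply not_0_INR; lia).
  field. split; auto.
Qed.

Lemma pois0 s : is_series (Pois s) 1.
Proof.
  assert (H := is_exp_Reals s). apply is_pseries_R in H.
  replace 1 with (exp (- s) * exp s) by (rewrite <- exp_plus; replace (-s + s) with 0 by ring; apply exp_0).
  apply (is_series_ext (fun n => exp (- s) * (/ INR (Factorial.fact n) * s ^ n))).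
  - intro n. unfold Pois. toR. field. apply INR_fact_neq_0.
  - apply is_series_scalR. exact H.
Qed.

Lemma pois1 s : is_series (fun i => INR i * Pois s i) s.
Proof.
  apply (is_series_eq_lim _ (s * 1 + INR 0 * Pois s 0)). simpl; ring.
  apply is_series_shiftR.
  apply (is_series_ext (fun i => s * Pois s i)).
  - intro i. rewrite Pois_shift. reflexivity.
  - apply is_series_scalR. apply pois0.
Qed.

Lemma pois2 s : is_series (fun i => INR i * INR i * Pois s i) (s * s + s).
Proof.
  replace (s * s + s) with (s * (s + 1) + INR 0 * INR 0 * Pois s 0) by (simpl; ring).
  apply is_series_shiftR.
  apply (is_series_ext (fun i => s * (INR i * Pois s i + Pois s i))).
  - intro i. cbv beta. rewrite Rmult_assoc. rewrite Pois_shift. rewrite S_INR. toR. ring.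
  - apply is_series_scalR. apply is_series_plusR. apply pois1. apply pois0.
Qed.

Definition Qn r j := Rpower 2 (- r) * (nbc r j * (/2)^j).

Lemma Rpower_inv_mul r : Rpower 2 (- r) * Rpower 2 r = 1.
Proof. rewrite Rpower_Ropp. field. unfold Rpower. apply Rgt_not_eq. apply exp_pos. Qed.

Lemma Q0 r : 0 < r -> is_series (Qn r) 1.
Proof.
  intro Hr. rewrite <- (Rpower_inv_mul r). apply is_series_scalR. apply nb_series; auto.
Qed.

Lemma Q1 r : 0 < r -> is_series (fun j => INR j * Qn r j) r.
Proof.
  intro Hr. apply (is_series_eq_lim _ (Rpower 2 (- r) * (r * Rpower 2 r))).
  { replace (Rpower 2 (- r) * (r * Rpower 2 r)) with (r * (Rpower 2 (- r) * Rpower 2 r)) by ring.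
      rewrite Rpower_inv_mul. ring. }
  apply (is_series_ext (fun j => Rpower 2 (- r) * (INR j * (nbc r j * (/2)^j)))).
  - intro j. unfold Qn. toR. ring.
  - apply is_series_scalR. apply M1_series; auto.
Qed.

Lemma Q2 r : 0 < r -> is_series (fun j => INR j * INR j * Qn r j) (r * r + 2 * r).
Proof.
  intro Hr. apply (is_series_eq_lim _ (Rpower 2 (- r) * ((r * r + 2 * r) * Rpower 2 r))).
  { replace (Rpower 2 (- r) * ((r * r + 2 * r) * Rpower 2 r)) with ((r * r + 2 * r) * (Rpower 2 (- r) * Rpower 2 r)) by ring.
      rewrite Rpower_inv_mul. ring. }
  apply (is_series_ext (fun j => Rpower 2 (- r) * (INR j * INR j * (nbc r j * (/2)^j)))).
  - intro j. unfold Qn. toR. ring.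
  - apply is_series_scalR. apply M2_series; auto.
Qed.

Lemma Qn_nonneg r j : 0 < r -> 0 <= Qn r j.
Proof.
  intro Hr. unfold Qn. apply Rmult_le_pos. left. unfold Rpower. apply exp_pos.
  apply Rmult_le_pos. left; apply nbc_pos; auto. apply pow_le. lra.
Qed.

Definition Fd s alpha i j := Pois s i * Qn (INR i + alpha + 1) j.

Lemma p_eta_diag alpha eta x k :
  p_eta alpha eta k x = sum_n (fun i => Fd (eta * x / 2) alpha i (k - i)%nat) k.
Proof.
  unfold p_eta, laguerre.
  set (s := eta * x / 2).
  replace (- eta * x / 2) with (- s) by (unfold s; field).
  rewrite sum_mult_l.
  apply sum_n_ext_loc. intros i Hi.
  unfold Fd, Pois, Qn.
  replace (gbinom (INR k + alpha) (k - i)) with (nbc (INR i + alpha + 1) (k - i)).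
  2:{ unfold nbc. f_equal. rewrite minus_INR by lia. ring. }
  replace (- (INR i + alpha + 1)) with ((- alpha - 1) + - INR i) by ring.
  rewrite Rpower_plus, Rpower_Ropp, Rpower_pow by lra.
  replace ((-1) ^ i / INR (Factorial.fact i) * nbc (INR i + alpha + 1) (k - i) * (- s) ^ i)
    with (s ^ i / INR (Factorial.fact i) * nbc (INR i + alpha + 1) (k - i)).
  2:{ replace (- s) with ((-1) * s) by ring. rewrite Rpow_mult_distr.
      assert (E : (-1)^i * (-1)^i = 1).
      { rewrite <- Rpow_mult_distr. replace ((-1)*(-1)) with 1 by ring. apply pow1. }
      transitivity (((-1)^i * (-1)^i) * (s ^ i / INR (Factorial.fact i) * nbc (INR i + alpha + 1) (k - i))).
      - rewrite E; ring.
      - field. apply INR_fact_neq_0. }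
  replace (exp (- eta * x / 2)) with (exp (- s)) by (unfold s; f_equal; field).
  rewrite pow_inv.
  replace (2 ^ k) with (2 ^ i * 2 ^ (k - i)).
  2:{ rewrite <- pow_add. f_equal. lia. }
  assert (0 < 2 ^ i) by (apply pow_lt; lra).
  assert (0 < 2 ^ (k - i)) by (apply pow_lt; lra).
  toR. field. split; [|split]; try lra. apply INR_fact_neq_0.
Qed.

Lemma rearr_g (F : nat -> nat -> R) (g : nat -> R) (r : nat -> R) S :
  (forall i j, 0 <= F i j) -> (forall n, 0 <= g n) ->
  (forall i, is_series (fun j => F i j * g (i + j)%nat) (r i)) -> is_series r S ->
  is_series (fun k => g k * sum_n (fun i => F i (k - i)%nat) k) S.
Proof.
  intros HF Hg Hi HS.
  apply (is_series_ext (fun k => sum_n (fun i => F i (k - i)%nat * g (i + (k - i))%nat) k)).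
  - intro k. rewrite sum_mult_l. apply sum_n_ext_loc. intros i Hik.
    replace (i + (k - i))%nat with k by lia. toR. ring.
  - apply (rearr (fun i j => F i j * g (i + j)%nat) r S); auto.
    intros; apply Rmult_le_pos; auto.
Qed.

Section Moments.
Variables (s alpha : R).
Hypothesis (Hs : 0 <= s) (Ha : -1 < alpha).

Let rr i := INR i + alpha + 1.
Lemma rr_pos i : 0 < rr i.
Proof. unfold rr. assert (H := pos_INR i). lra. Qed.

Lemma Fd_nonneg i j : 0 <= Fd s alpha i j.
Proof. unfold Fd. apply Rmult_le_pos. apply Pois_nonneg; auto. apply Qn_nonneg. apply rr_pos. Qed.

Definition ak k := sum_n (fun i => Fd s alpha i (k - i)%nat) k.

Lemma A0 : is_series ak 1.
Proof.
  apply (is_series_ext (fun k => 1 * ak k)). intro; toR; ring.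
  apply (rearr_g (Fd s alpha) (fun _ => 1) (Pois s)).
  - apply Fd_nonneg.
  - intros; lra.
  - intro i. unfold Fd. apply (is_series_eq_lim _ (Pois s i * 1)). ring.
    apply (is_series_ext (fun j => Pois s i * Qn (INR i + alpha + 1) j)). intro; toR; ring.
    apply is_series_scalR. apply Q0. apply rr_pos.
  - apply pois0.
Qed.

Lemma A1 : is_series (fun k => INR k * ak k) (2 * s + alpha + 1).
Proof.
  apply (rearr_g (Fd s alpha) INR (fun i => 2 * (INR i * Pois s i) + (alpha + 1) * Pois s i)).
  - apply Fd_nonneg.
  - apply pos_INR.
  - intro i. unfold Fd.
    apply (is_series_eq_lim _ (Pois s i * (INR i * 1 + rr i))). unfold rr; ring.
    apply (is_series_ext (fun j => Pois s i * (INR i * Qn (rr i) j + INR j * Qn (rr i) j))).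
    { intro j. rewrite plus_INR. unfold rr. toR. ring. }
    apply is_series_scalR. apply is_series_plusR.
    + apply is_series_scalR. apply Q0. apply rr_pos.
    + apply Q1. apply rr_pos.
  - apply (is_series_eq_lim _ (2 * s + (alpha + 1) * 1)). ring.
    apply is_series_plusR; apply is_series_scalR. apply pois1. apply pois0.
Qed.

Lemma A2 : is_series (fun k => INR k * INR k * ak k)
  (4 * s * s + s * (4 * alpha + 10) + (alpha + 1) * (alpha + 1) + 2 * (alpha + 1)).
Proof.
  apply (rearr_g (Fd s alpha) (fun k => INR k * INR k)
     (fun i => 4 * (INR i * INR i * Pois s i) + (4 * (alpha + 1) + 2) * (INR i * Pois s i)
               + ((alpha + 1) * (alpha + 1) + 2 * (alpha + 1)) * Pois s i)).
  - apply Fd_nonneg.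
  - intro n. assert (H := pos_INR n). nra.
  - intro i. unfold Fd.
    apply (is_series_eq_lim _ (Pois s i * (INR i * INR i * 1 + 2 * INR i * rr i + (rr i * rr i + 2 * rr i)))).
    unfold rr; ring.
    apply (is_series_ext (fun j => Pois s i * (INR i * INR i * Qn (rr i) j + 2 * INR i * (INR j * Qn (rr i) j)
          + INR j * INR j * Qn (rr i) j))).
    { intro j. rewrite plus_INR. unfold rr. toR. ring. }
    apply is_series_scalR. apply is_series_plusR. apply is_series_plusR.
    + apply is_series_scalR. apply Q0. apply rr_pos.
    + apply is_series_scalR. apply Q1. apply rr_pos.
    + apply Q2. apply rr_pos.
  - apply (is_series_eq_lim _ (4 * (s * s + s) + (4 * (alpha + 1) + 2) * s
        + ((alpha + 1) * (alpha + 1) + 2 * (alpha + 1)) * 1)). ring.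
    apply is_series_plusR. apply is_series_plusR.
    + apply is_series_scalR. apply pois2.
    + apply is_series_scalR. apply pois1.
    + apply is_series_scalR. apply pois0.
Qed.

Lemma ak_nonneg k : 0 <= ak k.
Proof. apply sum_nonneg. intros; apply Fd_nonneg. Qed.

End Moments.

Definition FI (f : R -> R) (l : R) := is_RInt_gen f (at_right 0) (Rbar_locally p_infty) l.
Definition pcont (f : R -> R) := forall t, 0 < t -> continuous f t.

Lemma at_right0_intro (Q : R -> Prop) d : 0 < d -> (forall y, 0 < y < d -> Q y) -> at_right 0 Q.
Proof.
  intros Hd H. exists (mkposreal d Hd). intros y Hy Hy0. apply H. split; auto.
  unfold ball in Hy; simpl in Hy. unfold AbsRing_ball, minus, plus, opp in Hy; simpl in Hy.
  rewrite Rabs_right in Hy; lra.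
Qed.

Lemma at_right0_elim (Q : R -> Prop) : at_right 0 Q -> exists d, 0 < d /\ forall y, 0 < y < d -> Q y.
Proof.
  intros [e He]. exists e. split. apply cond_pos. intros y Hy. apply He; [|lra].
  unfold ball; simpl. unfold AbsRing_ball, minus, plus, opp; simpl.
  rewrite Rabs_right; lra.
Qed.

Lemma pinf_intro (Q : R -> Prop) M : (forall y, M < y -> Q y) -> Rbar_locally p_infty Q.
Proof. intro H. exists M. exact H. Qed.

Lemma pinf_elim (Q : R -> Prop) : Rbar_locally p_infty Q -> exists M, forall y, M < y -> Q y.
Proof. intros [M H]. exists M. exact H. Qed.

Lemma ball_R (x e y : R) : ball x e y <-> Rabs (y - x) < e.
Proof. unfold ball; simpl. unfold AbsRing_ball, minus, plus, opp; simpl. tauto. Qed.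

Lemma exRInt_pos (f : R -> R) u v : pcont f -> 0 < u -> u <= v -> ex_RInt f u v.
Proof.
  intros Hf Hu Huv. apply (ex_RInt_continuous (V:=R_CompleteNormedModule)). intros z Hz.
  rewrite Rmin_left in Hz by lra. apply Hf. lra.
Qed.

Lemma RInt_Chasles_R (f : R -> R) a b c : pcont f -> 0 < a -> a <= b -> b <= c ->
  RInt f a c = RInt f a b + RInt f b c.
Proof.
  intros Hf Ha Hab Hbc. symmetry. apply (RInt_Chasles f a b c).
  apply exRInt_pos; auto. apply exRInt_pos; auto; lra.
Qed.

Lemma RInt_nonneg_R (h : R -> R) u v : pcont h -> (forall t, 0 < t -> 0 <= h t) -> 0 < u -> u <= v ->
  0 <= RInt h u v.
Proof.
  intros Hc Hp Hu Huv. apply RInt_ge_0; auto. apply exRInt_pos; auto.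
  intros x Hx; apply Hp; lra.
Qed.

Lemma RInt_mono_int (h : R -> R) a u v b : pcont h -> (forall t, 0 < t -> 0 <= h t) ->
  0 < a -> a <= u -> u <= v -> v <= b -> RInt h u v <= RInt h a b.
Proof.
  intros Hc Hp Ha Hau Huv Hvb.
  rewrite (RInt_Chasles_R h a u b) by (auto; lra).
  rewrite (RInt_Chasles_R h u v b) by (auto; lra).
  assert (0 <= RInt h a u) by (apply RInt_nonneg_R; auto).
  assert (0 <= RInt h v b) by (apply RInt_nonneg_R; auto; lra).
  lra.
Qed.

Lemma mono_exist (h : R -> R) C : pcont h -> (forall t, 0 < t -> 0 <= h t) ->
  (forall u v, 0 < u -> u < v -> RInt h u v <= C) -> ex_RInt_gen h (at_right 0) (Rbar_locally p_infty).
Proof.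
  intros Hc Hp HC.
  set (E := fun y => exists u v, 0 < u /\ u < v /\ y = RInt h u v).
  destruct (completeness E) as [m [Hub Hlub]].
  { exists C. intros y [u [v [Hu [Huv ->]]]]. apply HC; auto. }
  { exists (RInt h 1 2). exists 1, 2. repeat split; lra. }
  exists m. unfold is_RInt_gen, filterlimi, filter_le, filtermapi. intros P [eps Heps].
  assert (Hex : exists u0 v0, 0 < u0 /\ u0 < v0 /\ m - eps < RInt h u0 v0).
  { destruct (Classical_Prop.classic (exists u0 v0, 0 < u0 /\ u0 < v0 /\ m - eps < RInt h u0 v0)) as [H|H]; auto.
    exfalso. assert (Hb : is_upper_bound E (m - eps)).
    { intros y [u [v [Hu [Huv ->]]]]. apply Rnot_lt_le. intro Hl. apply H. exists u, v. auto. }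
    specialize (Hlub _ Hb). destruct eps as [e He]; simpl in *. lra. }
  destruct Hex as [u0 [v0 [Hu0 [Huv0 Hm]]]].
  apply (Filter_prod _ _ _ (fun a => 0 < a < u0) (fun b => v0 < b)).
  - apply (at_right0_intro _ u0); auto.
  - apply (pinf_intro _ v0); auto.
  - intros a b Ha Hb. simpl. exists (RInt h a b). split.
    + apply (RInt_correct (V:=R_CompleteNormedModule)). apply exRInt_pos; auto; lra.
    + apply Heps. apply ball_R.
      assert (H1 : RInt h a b <= m). { apply Hub. exists a, b. repeat split; lra. }
      assert (H2 : RInt h u0 v0 <= RInt h a b) by (apply RInt_mono_int; auto; lra).
      apply Rabs_lt_between. destruct eps as [e He]; simpl in *. lra.
Qed.

Lemma FI_unique f l : FI f l -> int0inf f = l.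
Proof. intro H. unfold int0inf. apply (is_RInt_gen_unique (V:=R_CompleteNormedModule)). exact H. Qed.

Lemma FI_ext f g l : (forall t, 0 < t -> f t = g t) -> FI f l -> FI g l.
Proof.
  intros Hfg H. unfold FI. apply (is_RInt_gen_ext f); auto.
  apply (Filter_prod _ _ _ (fun a => 0 < a) (fun b => 0 < b)).
  - apply (at_right0_intro _ 1). lra. intros; lra.
  - apply (pinf_intro _ 0). auto.
  - intros a b Ha Hb t Ht. simpl in Ht. apply Hfg.
    assert (Rmin a b > 0) by (apply Rmin_glb_lt; auto). lra.
Qed.

Lemma FI_plus f g lf lg : FI f lf -> FI g lg -> FI (fun t => f t + g t) (lf + lg).
Proof. intros H1 H2. exact (is_RInt_gen_plus (V:=R_NormedModule) f g lf lg H1 H2). Qed.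

Lemma FI_minus f g lf lg : FI f lf -> FI g lg -> FI (fun t => f t - g t) (lf - lg).
Proof. intros H1 H2. exact (is_RInt_gen_minus (V:=R_NormedModule) f g lf lg H1 H2). Qed.

Lemma FI_scal c f l : FI f l -> FI (fun t => c * f t) (c * l).
Proof. intros H. exact (is_RInt_gen_scal (V:=R_NormedModule) f c l H). Qed.

Lemma FI_eq_lim f l l' : l = l' -> FI f l -> FI f l'.
Proof. intros ->; auto. Qed.

Lemma FI_partial_le (h : R -> R) L u v : pcont h -> (forall t, 0 < t -> 0 <= h t) ->
  FI h L -> 0 < u -> u < v -> RInt h u v <= L.
Proof.
  intros Hc Hp HL Hu Huv. apply Rnot_lt_le. intro Hlt.
  set (e := RInt h u v - L).
  assert (He : 0 < e) by (unfold e; lra).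
  assert (HP := HL (fun y => Rabs (y - L) < e)).
  destruct HP as [Q R HQ HR HQR].
  { exists (mkposreal e He). intros y Hy. apply ball_R in Hy. exact Hy. }
  destruct (at_right0_elim _ HQ) as [d [Hd HQd]].
  destruct (pinf_elim _ HR) as [M HM].
  set (a := Rmin u d / 2). set (b := Rmax v M + 1).
  assert (Ha : 0 < a /\ a < u /\ a < d).
  { unfold a. assert (Rmin u d > 0) by (apply Rmin_glb_lt; lra).
    assert (Rmin u d <= u) by apply Rmin_l. assert (Rmin u d <= d) by apply Rmin_r. lra. }
  assert (Hb : v < b /\ M < b).
  { unfold b. assert (v <= Rmax v M) by apply Rmax_l. assert (M <= Rmax v M) by apply Rmax_r. lra. }
  destruct (HQR a b) as [y [Hy1 Hy2]].
  { apply HQd. lra. }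
  { apply HM. lra. }
  apply (is_RInt_unique (V:=R_CompleteNormedModule)) in Hy1. simpl in Hy1.
  assert (RInt h u v <= RInt h a b) by (apply RInt_mono_int; auto; lra).
  apply Rabs_lt_between in Hy2. rewrite <- Hy1 in Hy2. unfold e in *. lra.
Qed.

Lemma FI_dom (f g : R -> R) L : pcont f -> pcont g -> (forall t, 0 < t -> Rabs (f t) <= g t) ->
  FI g L -> exists l, FI f l.
Proof.
  intros Hf Hg Hfg HL.
  assert (Hgp : forall t, 0 < t -> 0 <= g t).
  { intros t Ht. specialize (Hfg t Ht). assert (0 <= Rabs (f t)) by apply Rabs_pos. lra. }
  set (h := fun t => f t + g t).
  assert (Hhc : pcont h).
  { intros t Ht. apply (continuous_plus (V:=R_NormedModule) f g); auto. }
  assert (Hhp : forall t, 0 < t -> 0 <= h t).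
  { intros t Ht. unfold h. specialize (Hfg t Ht). apply Rabs_le_between in Hfg. lra. }
  destruct (mono_exist h (2 * L) Hhc Hhp) as [lh Hlh].
  { intros u v Hu Huv. apply Rle_trans with (RInt (fun t => 2 * g t) u v).
    - apply RInt_le. lra. apply exRInt_pos; auto; lra.
      apply exRInt_pos; auto; try lra. intros t Ht.
      apply (continuous_scal_r (V:=R_NormedModule) 2 g). apply Hg. auto.
      intros t Ht. unfold h. specialize (Hfg t ltac:(lra)). apply Rabs_le_between in Hfg. lra.
    - replace (RInt (fun t => 2 * g t) u v) with (2 * RInt g u v).
      assert (RInt g u v <= L) by (apply (FI_partial_le g L u v); auto). lra.
      symmetry. apply (RInt_scal (V:=R_CompleteNormedModule) g u v 2). apply exRInt_pos; auto; lra. }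
  exists (lh - L). apply (FI_ext (fun t => h t - g t)).
  - intros t Ht. unfold h. ring.
  - apply FI_minus; auto.
Qed.

Lemma FI_subst (f : R -> R) lam l : 0 < lam -> FI f l -> FI (fun z => lam * f (lam * z)) l.
Proof.
  intros Hl H. unfold FI, is_RInt_gen, filterlimi, filter_le, filtermapi in *.
  intros P HP. destruct (H P HP) as [Q R HQ HR HQR].
  apply (Filter_prod _ _ _ (fun a => Q (lam * a)) (fun b => R (lam * b))).
  - destruct (at_right0_elim _ HQ) as [d [Hd HQd]].
    apply (at_right0_intro _ (d / lam)). apply Rdiv_lt_0_compat; auto.
    intros y [Hy0 Hy]. apply HQd. split. nra.
    apply (Rmult_lt_compat_l lam) in Hy; [|lra].
    replace (lam * (d / lam)) with d in Hy by (field; lra). exact Hy.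
  - destruct (pinf_elim _ HR) as [M HM].
    apply (pinf_intro _ (M / lam)). intros y Hy. apply HM.
    apply (Rmult_lt_compat_l lam) in Hy; [|lra].
    replace (lam * (M / lam)) with M in Hy by (field; lra). exact Hy.
  - intros a b Ha Hb. destruct (HQR _ _ Ha Hb) as [y [Hy1 Hy2]]. exists y. split; auto.
    simpl in *.
    assert (Hc := is_RInt_comp_lin f lam 0 a b y).
    replace (lam * a + 0) with (lam * a) in Hc by ring.
    replace (lam * b + 0) with (lam * b) in Hc by ring.
    specialize (Hc Hy1).
    apply (is_RInt_ext (fun y0 => scal lam (f (lam * y0 + 0)))); auto.
    intros t _. change scal with Rmult. simpl. f_equal. f_equal. ring.
Qed.

Definition gam (a t : R) := Rpower t (a - 1) * exp (- t).

Lemma Gamma_gam a : Gamma a = int0inf (gam a).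
Proof. reflexivity. Qed.

Lemma gam_cont a : pcont (gam a).
Proof.
  intros t Ht. apply (ex_derive_continuous (V:=R_NormedModule)). unfold gam, Rpower.
  auto_derive. lra.
Qed.

Lemma gam_pos a t : 0 < gam a t.
Proof. unfold gam, Rpower. apply Rmult_lt_0_compat; apply exp_pos. Qed.

Lemma ln_le_lin y : 0 < y -> ln y <= y - 1.
Proof. intro Hy. assert (H := exp_ineq1_le (ln y)). rewrite exp_ln in H by auto. lra. Qed.

Lemma ln_bound c : exists K, forall t, 1 <= t -> c * ln t <= t / 2 + K.
Proof.
  set (d := Rabs c + 1).
  assert (Hd : 0 < d) by (unfold d; assert (H := Rabs_pos c); lra).
  exists (d * (ln (2 * d) - 1)). intros t Ht.
  assert (Hl : 0 <= ln t) by (rewrite <- ln_1; apply ln_le; lra).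
  assert (H1 : c * ln t <= d * ln t).
  { apply Rmult_le_compat_r; auto. unfold d. assert (H := Rle_abs c). lra. }
  assert (H2 : ln t = ln (t / (2 * d)) + ln (2 * d)).
  { rewrite <- ln_mult. f_equal. field. lra. apply Rdiv_lt_0_compat; lra. lra. }
  assert (H3 := ln_le_lin (t / (2 * d)) ltac:(apply Rdiv_lt_0_compat; lra)).
  assert (H4 : d * ln t <= d * (t / (2 * d) - 1 + ln (2 * d))).
  { apply Rmult_le_compat_l; lra. }
  replace (d * (t / (2 * d) - 1 + ln (2 * d))) with (t / 2 + d * (ln (2 * d) - 1)) in H4 by (field; lra).
  lra.
Qed.

Lemma gam_tail a : exists E, 0 < E /\ forall t, 1 <= t -> gam a t <= E * exp (- t / 2).
Proof.
  destruct (ln_bound (a - 1)) as [K HK]. exists (exp K). split. apply exp_pos.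
  intros t Ht. unfold gam, Rpower. rewrite <- !exp_plus. apply exp_mono.
  specialize (HK t Ht). lra.
Qed.

Lemma RInt_pow_head a u : 0 < a -> 0 < u -> u <= 1 -> RInt (fun t => Rpower t (a - 1)) u 1 <= / a.
Proof.
  intros Ha Hu Hu1.
  assert (H : is_RInt (fun t => Rpower t (a - 1)) u 1 (minus (Rpower 1 a / a) (Rpower u a / a))).
  { apply (is_RInt_derive (V:=R_CompleteNormedModule) (fun t => Rpower t a / a)).
    - intros x Hx. rewrite Rmin_left in Hx by lra.
      unfold Rpower. auto_derive. lra. replace ((a - 1) * ln x) with (a * ln x + - ln x) by ring. rewrite exp_plus, exp_Ropp, exp_ln by lra.
      field. split; lra.
    - intros x Hx. rewrite Rmin_left in Hx by lra.
      apply (ex_derive_continuous (V:=R_NormedModule)). unfold Rpower. auto_derive. lra. }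
  apply (is_RInt_unique (V:=R_CompleteNormedModule)) in H. rewrite H.
  unfold minus, plus, opp; simpl. unfold Rpower at 1. rewrite ln_1, Rmult_0_r, exp_0.
  assert (0 < Rpower u a) by (unfold Rpower; apply exp_pos).
  assert (0 < / a) by (apply Rinv_0_lt_compat; auto).
  unfold Rdiv. assert (0 < Rpower u a * / a) by (apply Rmult_lt_0_compat; auto). lra.
Qed.

Lemma RInt_exp_tail v : 1 <= v -> RInt (fun t => exp (- t / 2)) 1 v <= 2.
Proof.
  intro Hv.
  assert (H : is_RInt (fun t => exp (- t / 2)) 1 v (minus (-2 * exp (- v / 2)) (-2 * exp (- 1 / 2)))).
  { apply (is_RInt_derive (V:=R_CompleteNormedModule) (fun t => -2 * exp (- t / 2))).
    - intros x Hx. auto_derive. auto. unfold Rdiv. field.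
    - intros x Hx. apply (ex_derive_continuous (V:=R_NormedModule)). auto_derive. auto. }
  apply (is_RInt_unique (V:=R_CompleteNormedModule)) in H. rewrite H.
  unfold minus, plus, opp; simpl.
  assert (0 < exp (- v / 2)) by apply exp_pos.
  assert (exp (- 1 / 2) <= 1).
  { apply Rle_trans with (exp 0). apply exp_mono. lra. rewrite exp_0; lra. }
  lra.
Qed.

Lemma gam_FI a : 0 < a -> FI (gam a) (Gamma a).
Proof.
  intro Ha. destruct (gam_tail a) as [E [HE HEt]].
  destruct (mono_exist (gam a) (/ a + E * 2) (gam_cont a)) as [l Hl].
  - intros t Ht; left; apply gam_pos.
  - intros u v Hu Huv.
    set (u' := Rmin u 1). set (v' := Rmax v 1).
    assert (Hu' : 0 < u' /\ u' <= u /\ u' <= 1).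
    { unfold u'. split. apply Rmin_glb_lt; lra. split. apply Rmin_l. apply Rmin_r. }
    assert (Hv' : v <= v' /\ 1 <= v') by (unfold v'; split; [apply Rmax_l|apply Rmax_r]).
    assert (Hgp : forall t, 0 < t -> 0 <= gam a t) by (intros; left; apply gam_pos).
    apply Rle_trans with (RInt (gam a) u' v').
    { apply RInt_mono_int; auto. apply gam_cont. all: lra. }
    rewrite (RInt_Chasles_R (gam a) u' 1 v') by (try apply gam_cont; lra).
    apply Rplus_le_compat.
    + apply Rle_trans with (RInt (fun t => Rpower t (a - 1)) u' 1).
      * apply RInt_le. lra. apply exRInt_pos. apply gam_cont. lra. lra.
        apply exRInt_pos. intros t Ht. apply (ex_derive_continuous (V:=R_NormedModule)).
        unfold Rpower. auto_derive. lra. lra. lra.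
        intros x Hx. unfold gam. assert (0 < Rpower x (a - 1)) by (unfold Rpower; apply exp_pos).
        assert (exp (- x) <= 1) by (apply Rle_trans with (exp 0); [apply exp_mono; lra | rewrite exp_0; lra]).
        nra.
      * apply RInt_pow_head; lra.
    + apply Rle_trans with (RInt (fun t => E * exp (- t / 2)) 1 v').
      * apply RInt_le. lra. apply exRInt_pos. apply gam_cont. lra. lra.
        apply exRInt_pos. intros t Ht. apply (ex_derive_continuous (V:=R_NormedModule)).
        auto_derive. auto. lra. lra.
        intros x Hx. apply HEt. lra.
      * replace (RInt (fun t => E * exp (- t / 2)) 1 v') with (E * RInt (fun t => exp (- t / 2)) 1 v').
        -- assert (H := RInt_exp_tail v' ltac:(lra)). nra.
        -- symmetry. apply (RInt_scal (V:=R_CompleteNormedModule) (fun t => exp (- t / 2)) 1 v' E).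
           apply ex_RInt_continuous. intros z Hz. apply (ex_derive_continuous (V:=R_NormedModule)).
           auto_derive. auto.
  - rewrite Gamma_gam. rewrite (FI_unique _ _ Hl). exact Hl.
Qed.

Lemma Gamma_pos a : 0 < a -> 0 < Gamma a.
Proof.
  intro Ha. apply Rlt_le_trans with (RInt (gam a) 1 2).
  - apply RInt_gt_0. lra. intros; apply gam_pos. intros x Hx. apply gam_cont. lra.
  - apply (FI_partial_le (gam a)). apply gam_cont. intros; left; apply gam_pos.
    apply gam_FI; auto. lra. lra.
Qed.

Lemma lim_head a : 0 < a -> filterlim (fun t => - Rpower t a * exp (- t)) (at_right 0) (locally 0).
Proof.
  intro Ha. apply filterlim_locally. intros [eps He].
  apply (at_right0_intro _ (exp (ln eps / a))). apply exp_pos.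
  intros t [Ht0 Ht]. apply ball_R. simpl.
  assert (H1 : ln t < ln eps / a).
  { rewrite <- (ln_exp (ln eps / a)). apply ln_increasing; auto. }
  assert (H2 : exp (a * ln t) < eps).
  { rewrite <- (exp_ln eps) by auto. apply exp_increasing.
    apply (Rmult_lt_compat_l a) in H1; auto. replace (a * (ln eps / a)) with (ln eps) in H1 by (field; lra). lra. }
  assert (H3 : exp (- t) <= 1) by (apply Rle_trans with (exp 0); [apply exp_mono; lra | rewrite exp_0; lra]).
  assert (H4 : 0 < exp (- t)) by apply exp_pos.
  assert (H5 : 0 < exp (a * ln t)) by apply exp_pos.
  unfold Rpower. rewrite Rminus_0_r. rewrite Ropp_mult_distr_l_reverse, Rabs_Ropp. rewrite Rabs_pos_eq by nra. nra.
Qed.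

Lemma lim_tail a : filterlim (fun t => - Rpower t a * exp (- t)) (Rbar_locally p_infty) (locally 0).
Proof.
  apply filterlim_locally. intros [eps He].
  destruct (ln_bound a) as [K HK].
  apply (pinf_intro _ (Rmax 1 (2 * (K - ln eps)))).
  intros t Ht. apply ball_R. simpl.
  assert (Ht1 : 1 <= t) by (assert (H := Rmax_l 1 (2 * (K - ln eps))); lra).
  assert (Ht2 : 2 * (K - ln eps) < t) by (assert (H := Rmax_r 1 (2 * (K - ln eps))); lra).
  specialize (HK t Ht1).
  unfold Rpower. rewrite Rminus_0_r. rewrite Ropp_mult_distr_l_reverse, Rabs_Ropp.
  rewrite <- exp_plus. rewrite Rabs_pos_eq by (left; apply exp_pos).
  rewrite <- (exp_ln eps) by auto. apply exp_increasing. lra.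
Qed.

Lemma Gamma_rec a : 0 < a -> Gamma (a + 1) = a * Gamma a.
Proof.
  intro Ha.
  set (f := fun t => - Rpower t a * exp (- t)).
  assert (Hd : forall t, 0 < t -> is_derive f t (gam (a + 1) t - a * gam a t)).
  { intros t Ht. unfold f, gam, Rpower. auto_derive. lra.
    replace ((a + 1 - 1) * ln t) with (a * ln t) by ring.
    replace ((a - 1) * ln t) with (a * ln t + - ln t) by ring.
    rewrite (exp_plus (a * ln t)), (exp_Ropp (ln t)), (exp_ln t) by lra. field. lra. }
  assert (HI : is_RInt_gen (Derive f) (at_right 0) (Rbar_locally p_infty) (0 - 0)).
  { apply is_RInt_gen_Derive.
    - apply (Filter_prod _ _ _ (fun a => 0 < a) (fun b => 0 < b)).
      apply (at_right0_intro _ 1). lra. intros; lra.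
      apply (pinf_intro _ 0). auto.
      intros u v Hu Hv x Hx. simpl in Hx. eexists. apply Hd.
      assert (Rmin u v > 0) by (apply Rmin_glb_lt; auto). lra.
    - apply (Filter_prod _ _ _ (fun a => 0 < a) (fun b => 0 < b)).
      apply (at_right0_intro _ 1). lra. intros; lra.
      apply (pinf_intro _ 0). auto.
      intros u v Hu Hv x Hx. simpl in Hx.
      assert (Hx0 : 0 < x) by (assert (Rmin u v > 0) by (apply Rmin_glb_lt; auto); lra).
      apply (continuous_ext_loc _ (fun t => gam (a + 1) t - a * gam a t)).
      + exists (mkposreal (x / 2) ltac:(lra)). intros y Hy. apply ball_R in Hy. simpl in Hy.
        symmetry. apply is_derive_unique. apply Hd. apply Rabs_lt_between in Hy. unfold minus, plus, opp in Hy; simpl in Hy. lra.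
      + apply (continuous_minus (V:=R_NormedModule)). apply gam_cont; auto.
        apply (continuous_scal_r (V:=R_NormedModule) a). apply gam_cont; auto.
    - apply lim_head; auto.
    - apply lim_tail. }
  assert (HI' : FI (fun t => gam (a + 1) t - a * gam a t) 0).
  { apply (FI_ext (Derive f)). intros t Ht. apply is_derive_unique. apply Hd; auto.
    unfold FI. apply (FI_eq_lim _ (0 - 0)). ring. exact HI. }
  assert (H2 : FI (fun t => gam (a + 1) t - a * gam a t) (Gamma (a + 1) - a * Gamma a)).
  { apply FI_minus. apply gam_FI. lra. apply FI_scal. apply gam_FI. auto. }
  apply FI_unique in HI'. apply FI_unique in H2. lra.
Qed.

Section Kernel.
Variables (beta eta : R) (k : nat).
Hypotheses (Hb : 0 < beta) (He : 0 < eta) (Hk : (1 <= k)%nat).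

Let c := INR k * beta.
Let lam := eta * beta.

Lemma c_pos : 0 < c.
Proof. unfold c. apply Rmult_lt_0_compat; auto. apply lt_0_INR. lia. Qed.

Lemma lam_pos : 0 < lam.
Proof. unfold lam. apply Rmult_lt_0_compat; auto. Qed.

Lemma Gc_ne : Gamma c <> 0.
Proof. apply Rgt_not_eq, Gamma_pos, c_pos. Qed.
Lemma lam_ne : lam <> 0.
Proof. apply Rgt_not_eq, lam_pos. Qed.
Ltac fld := field; repeat split; try apply Gc_ne; try apply lam_ne; lra.

Lemma I_eq z : I_kernel beta eta k z = / Gamma c * (lam * gam c (lam * z)).
Proof.
  unfold I_kernel, gam. fold c. fold lam.
  replace (- eta * beta * z) with (- (lam * z)) by (unfold lam; ring).
  replace (eta * beta * z) with (lam * z) by (unfold lam; ring).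
  assert (Gamma c <> 0) by (apply Rgt_not_eq; apply Gamma_pos; apply c_pos).
  field. auto.
Qed.

Lemma I_nonneg z : 0 <= I_kernel beta eta k z.
Proof.
  rewrite I_eq. apply Rmult_le_pos. left. apply Rinv_0_lt_compat. apply Gamma_pos, c_pos.
  apply Rmult_le_pos. left; apply lam_pos. left; apply gam_pos.
Qed.

Lemma I_cont : pcont (I_kernel beta eta k).
Proof.
  intros t Ht. apply (continuous_ext_loc _ (fun z => / Gamma c * (lam * gam c (lam * z)))).
  - exists (mkposreal 1 Rlt_0_1). intros y _. symmetry. apply I_eq.
  - apply (ex_derive_continuous (V:=R_NormedModule)). unfold gam, Rpower. auto_derive.
    assert (0 < lam * t) by (apply Rmult_lt_0_compat; auto; apply lam_pos). lra.
Qed.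

Lemma I_FI0 : FI (I_kernel beta eta k) 1.
Proof.
  apply (FI_ext (fun z => / Gamma c * (lam * gam c (lam * z)))).
  { intros; symmetry; apply I_eq. }
  apply (FI_eq_lim _ (/ Gamma c * Gamma c)).
  { field. apply Rgt_not_eq, Gamma_pos, c_pos. }
  apply FI_scal. apply FI_subst. apply lam_pos. apply gam_FI. apply c_pos.
Qed.

Lemma gam_shift a y : 0 < y -> gam (a + 1) y = y * gam a y.
Proof.
  intro Hy. unfold gam. replace (a + 1 - 1) with ((a - 1) + 1) by ring.
  rewrite Rpower_plus, Rpower_1 by auto. ring.
Qed.

Lemma I_FI1 : FI (fun z => I_kernel beta eta k z * z) (INR k / eta).
Proof.
  apply (FI_ext (fun z => / (Gamma c * lam) * (lam * gam (c + 1) (lam * z)))).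
  { intros z Hz. rewrite I_eq. rewrite gam_shift.
    fld. apply Rmult_lt_0_compat; auto. apply lam_pos. }
  apply (FI_eq_lim _ (/ (Gamma c * lam) * Gamma (c + 1))).
  { rewrite Gamma_rec by apply c_pos. assert (Hg := Gc_ne). unfold c, lam in *. field.
    repeat split; auto; lra. }
  apply FI_scal. apply FI_subst. apply lam_pos. apply gam_FI. assert (H := c_pos). lra.
Qed.

Lemma I_FI2 : FI (fun z => I_kernel beta eta k z * (z * z))
  (INR k / eta * (INR k / eta) + INR k / (beta * eta * eta)).
Proof.
  apply (FI_ext (fun z => / (Gamma c * lam * lam) * (lam * gam (c + 1 + 1) (lam * z)))).
  { intros z Hz. assert (0 < lam * z) by (apply Rmult_lt_0_compat; auto; apply lam_pos).
    rewrite I_eq. rewrite gam_shift by auto. rewrite gam_shift by auto.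
    fld. }
  apply (FI_eq_lim _ (/ (Gamma c * lam * lam) * Gamma (c + 1 + 1))).
  { rewrite Gamma_rec by (assert (H := c_pos); lra). rewrite Gamma_rec by apply c_pos.
    assert (Hg := Gc_ne). unfold c, lam in *. field. repeat split; auto; lra. }
  apply FI_scal. apply FI_subst. apply lam_pos. apply gam_FI. assert (H := c_pos). lra.
Qed.

Definition mom2 (x : R) := (INR k / eta - x) * (INR k / eta - x) + INR k / (beta * eta * eta).

Lemma I_FIsq x : FI (fun z => I_kernel beta eta k z * ((z - x) * (z - x))) (mom2 x).
Proof.
  apply (FI_ext (fun z => (I_kernel beta eta k z * (z * z) - 2 * x * (I_kernel beta eta k z * z))
                          + x * x * I_kernel beta eta k z)).
  { intros; ring. }
  apply (FI_eq_lim _ ((INR k / eta * (INR k / eta) + INR k / (beta * eta * eta) - 2 * x * (INR k / eta))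
                      + x * x * 1)).
  { unfold mom2. ring. }
  apply FI_plus. apply FI_minus. apply I_FI2. apply FI_scal. apply I_FI1. apply FI_scal. apply I_FI0.
Qed.

Lemma I_approx (Phi : R -> R) B x eps C :
  pcont Phi -> (forall z, 0 < z -> Rabs (Phi z) <= B) -> 0 <= C ->
  (forall z, 0 < z -> Rabs (Phi z - Phi x) <= eps + C * ((z - x) * (z - x))) ->
  Rabs (int0inf (fun z => I_kernel beta eta k z * Phi z) - Phi x) <= eps + C * mom2 x.
Proof.
  intros HPc HB HC Hbd.
  destruct (FI_dom (fun z => I_kernel beta eta k z * Phi z) (fun z => B * I_kernel beta eta k z) (B * 1))
    as [l Hl].
  - intros t Ht. apply (continuous_mult (K:=R_AbsRing)). apply I_cont; auto. apply HPc; auto.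
  - intros t Ht. apply (continuous_scal_r (V:=R_NormedModule) B). apply I_cont; auto.
  - intros t Ht. rewrite Rabs_mult. rewrite Rabs_pos_eq by apply I_nonneg. rewrite Rmult_comm.
    apply Rmult_le_compat_r. apply I_nonneg. apply HB; auto.
  - apply FI_scal. apply I_FI0.
  - rewrite (FI_unique _ _ Hl).
    assert (H1 : FI (fun z => I_kernel beta eta k z * Phi z - Phi x * I_kernel beta eta k z) (l - Phi x * 1)).
    { apply FI_minus; auto. apply FI_scal. apply I_FI0. }
    assert (H2 : FI (fun z => eps * I_kernel beta eta k z + C * (I_kernel beta eta k z * ((z - x) * (z - x))))
                    (eps * 1 + C * mom2 x)).
    { apply FI_plus; apply FI_scal. apply I_FI0. apply I_FIsq. }
    replace (l - Phi x) with (l - Phi x * 1) by ring.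
    replace (eps + C * mom2 x) with (eps * 1 + C * mom2 x) by ring.
    refine (RInt_gen_norm (V:=R_CompleteNormedModule) (Fa:=at_right 0) (Fb:=Rbar_locally p_infty) _ _ _ _ _ _ H1 H2).
    + apply (Filter_prod _ _ _ (fun a => 0 < a < 1) (fun b => 1 < b)).
      apply (at_right0_intro _ 1). lra. auto. apply (pinf_intro _ 1). auto.
      intros a b Ha Hb'. simpl. lra.
    + apply (Filter_prod _ _ _ (fun a => 0 < a) (fun b => 0 < b)).
      apply (at_right0_intro _ 1). lra. intros; lra. apply (pinf_intro _ 0). auto.
      intros a b Ha Hb' z Hz. simpl in Hz.
      change (Rabs (I_kernel beta eta k z * Phi z - Phi x * I_kernel beta eta k z) <=
              eps * I_kernel beta eta k z + C * (I_kernel beta eta k z * ((z - x) * (z - x)))).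
      replace (I_kernel beta eta k z * Phi z - Phi x * I_kernel beta eta k z) with
        (I_kernel beta eta k z * (Phi z - Phi x)) by ring.
      rewrite Rabs_mult, Rabs_pos_eq by apply I_nonneg.
      replace (eps * I_kernel beta eta k z + C * (I_kernel beta eta k z * ((z - x) * (z - x)))) with
        (I_kernel beta eta k z * (eps + C * ((z - x) * (z - x)))) by ring.
      apply Rmult_le_compat_l. apply I_nonneg. apply Hbd. lra.
Qed.

End Kernel.

Definition nonnegR (y : R) := 0 <= y.

Lemma Rmax0_lip a b : Rabs (Rmax 0 a - Rmax 0 b) <= Rabs (a - b).
Proof.
  unfold Rmax. destruct (Rle_dec 0 a); destruct (Rle_dec 0 b);
  unfold Rabs; repeat destruct Rcase_abs; lra.
Qed.

Lemma Psi_cont (Phi : R -> R)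
  (Hcont : forall x, 0 <= x ->
     filterlim Phi (within (fun y => 0 <= y) (locally x)) (locally (Phi x))) y :
  continuity_pt (fun y => Phi (Rmax 0 y)) y.
Proof.
  apply continuity_pt_filterlim.
  apply (filterlim_comp _ _ _ (Rmax 0) Phi _ (within (fun y => 0 <= y) (locally (Rmax 0 y)))).
  - intros P [eps HP]. exists eps. intros z Hz. simpl.
    apply HP. apply ball_R. apply ball_R in Hz.
    apply Rle_lt_trans with (Rabs (z - y)); auto. apply Rmax0_lip.
    apply Rmax_l.
  - apply Hcont. apply Rmax_l.
Qed.

Lemma Phi_pcont (Phi : R -> R)
  (Hcont : forall x, 0 <= x ->
     filterlim Phi (within (fun y => 0 <= y) (locally x)) (locally (Phi x))) :
  pcont Phi.
Proof.
  intros t Ht P HP. specialize (Hcont t (Rlt_le _ _ Ht) P HP).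
  unfold within in Hcont. simpl in Hcont. destruct Hcont as [e He].
  exists (mkposreal (Rmin e t) ltac:(apply Rmin_glb_lt; [apply cond_pos|auto])).
  intros z Hz. apply He.
  - unfold ball in Hz; simpl in Hz; unfold AbsRing_ball, minus, plus, opp, abs in Hz; simpl in Hz. change (Rabs (z - t) < Rmin e t) in Hz.
    apply ball_R. assert (Rmin e t <= e) by apply Rmin_l. lra.
  - unfold ball in Hz; simpl in Hz; unfold AbsRing_ball, minus, plus, opp, abs in Hz; simpl in Hz. change (Rabs (z - t) < Rmin e t) in Hz.
    assert (Rmin e t <= t) by apply Rmin_r.
    apply Rabs_lt_between in Hz. lra.
Qed.

Lemma unif_bound (Phi : R -> R) B X eps
  (Hcont : forall x, 0 <= x ->
     filterlim Phi (within (fun y => 0 <= y) (locally x)) (locally (Phi x)))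
  (HB : forall x, 0 <= x -> Rabs (Phi x) <= B) : 0 <= X -> 0 < eps ->
  exists C, 0 <= C /\ forall x z, 0 <= x <= X -> 0 <= z ->
    Rabs (Phi z - Phi x) <= eps + C * ((z - x) * (z - x)).
Proof.
  intros HX He.
  set (Psi := fun y => Phi (Rmax 0 y)).
  assert (HU := Heine Psi (fun c => 0 <= c <= X + 1) (compact_P3 0 (X + 1))
                  (fun y _ => Psi_cont Phi Hcont y)).
  destruct (HU (mkposreal eps He)) as [[d Hd] Hdel]. simpl in Hdel.
  set (d' := Rmin d 1).
  assert (Hd' : 0 < d' /\ d' <= d /\ d' <= 1).
  { unfold d'. split. apply Rmin_glb_lt; lra. split. apply Rmin_l. apply Rmin_r. }
  assert (HB0 : 0 <= B) by (apply Rle_trans with (Rabs (Phi 0)); [apply Rabs_pos|apply HB; lra]).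
  exists (2 * B / (d' * d')). split.
  { apply Rdiv_le_0_compat. lra. nra. }
  intros x z Hx Hz.
  destruct (Rlt_dec (Rabs (z - x)) d') as [Hlt|Hge].
  - assert (Hzx : z <= X + 1) by (apply Rabs_lt_between in Hlt; lra).
    assert (H := Hdel z x ltac:(lra) ltac:(lra) ltac:(lra)).
    unfold Psi in H. rewrite !Rmax_right in H by lra.
    assert (0 <= 2 * B / (d' * d') * ((z - x) * (z - x))).
    { apply Rmult_le_pos. apply Rdiv_le_0_compat. lra. nra. pose proof (Rle_0_sqr (z - x)); unfold Rsqr in *; lra. }
    lra.
  - apply Rnot_lt_le in Hge.
    assert (Hsq : d' * d' <= (z - x) * (z - x)).
    { assert (E : Rabs (z - x) * Rabs (z - x) = (z - x) * (z - x)).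
      { rewrite <- Rabs_mult; apply Rabs_pos_eq. pose proof (Rle_0_sqr (z - x)); unfold Rsqr in *; lra. }
      rewrite <- E. destruct Hd' as [Hd'0 _]. apply Rmult_le_compat; lra. }
    assert (H1 : Rabs (Phi z - Phi x) <= 2 * B).
    { unfold Rminus. apply Rle_trans with (Rabs (Phi z) + Rabs (- Phi x)). apply Rabs_triang.
      rewrite Rabs_Ropp. assert (H1 := HB z Hz). assert (H2 := HB x ltac:(lra)). lra. }
    assert (H2 : 2 * B <= 2 * B / (d' * d') * ((z - x) * (z - x))).
    { replace (2 * B / (d' * d') * ((z - x) * (z - x))) with (2 * B * ((z - x) * (z - x) / (d' * d'))) by (field; lra).
      rewrite <- (Rmult_1_r (2 * B)) at 1. apply Rmult_le_compat_l. lra.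
      apply (Rmult_le_reg_r (d' * d')). nra. unfold Rdiv. rewrite Rmult_assoc, Rinv_l by nra. lra. }
    lra.
Qed.

Definition Tval alpha beta eta x :=
  let s := eta * x / 2 in
  (4 * s * s + s * (4 * alpha + 10) + (alpha + 1) * (alpha + 1) + 2 * (alpha + 1)) * (/ (eta * eta))
  + (2 * s + alpha + 1) * (/ (beta * eta * eta) - 2 * x / eta) + x * x * 1.

Lemma main_bound alpha beta Phi B eps C eta x :
  -1 < alpha -> 0 < beta -> 0 < eta -> 0 <= x ->
  pcont Phi -> (forall z, 0 <= z -> Rabs (Phi z) <= B) -> 0 <= C -> 0 <= eps ->
  (forall z, 0 <= z -> Rabs (Phi z - Phi x) <= eps + C * ((z - x) * (z - x))) ->
  Rabs (R_op alpha beta eta Phi x - Phi x) <= eps + C * Tval alpha beta eta x.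
Proof.
  intros Ha Hb He Hx HPc HB HC Heps Hbd.
  set (s := eta * x / 2).
  assert (Hs : 0 <= s) by (unfold s; apply Rmult_le_pos; [apply Rmult_le_pos|]; lra).
  set (a := ak s alpha).
  assert (Hpa : forall k, p_eta alpha eta k x = a k).
  { intro k. rewrite p_eta_diag. reflexivity. }
  set (J := fun k => int0inf (fun z => I_kernel beta eta k z * Phi z)).
  set (u := fun k => match k with O => a 0%nat * (Phi 0 - Phi x) | S j => a (S j) * (J (S j) - Phi x) end).
  set (v := fun k => eps * a k + C * (a k * mom2 beta eta k x)).
  assert (Han : forall k, 0 <= a k) by (intro; apply ak_nonneg; auto).
  assert (Huv : forall k, Rabs (u k) <= v k).
  { intros [|j].
    - unfold u, v. rewrite Rabs_mult, (Rabs_pos_eq (a 0%nat)) by auto.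
      unfold mom2. simpl INR.
      replace (eps * a 0%nat + C * (a 0%nat * ((0 / eta - x) * (0 / eta - x) + 0 / (beta * eta * eta))))
        with (a 0%nat * (eps + C * ((0 - x) * (0 - x)))) by (field; lra).
      apply Rmult_le_compat_l; auto. apply Hbd. lra.
    - unfold u, v. rewrite Rabs_mult, (Rabs_pos_eq (a (S j))) by auto.
      replace (eps * a (S j) + C * (a (S j) * mom2 beta eta (S j) x))
        with (a (S j) * (eps + C * mom2 beta eta (S j) x)) by ring.
      apply Rmult_le_compat_l; auto. unfold J.
      apply (I_approx beta eta (S j) Hb He ltac:(lia) Phi B x eps C); auto.
      intros; apply HB; lra. intros; apply Hbd; lra. }
  assert (Hv : is_series v (eps * 1 + C * Tval alpha beta eta x)).
  { apply is_series_plusR. apply is_series_scalR. apply A0; auto.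
    apply is_series_scalR. unfold Tval. fold s.
    apply (is_series_ext (fun k => / (eta * eta) * (INR k * INR k * a k)
             + (/ (beta * eta * eta) - 2 * x / eta) * (INR k * a k) + x * x * a k)).
    { intro k. unfold mom2. toR. field. lra. }
    apply is_series_plusR. apply is_series_plusR.
    - apply (is_series_eq_lim _ (/ (eta * eta) * (4 * s * s + s * (4 * alpha + 10) + (alpha + 1) * (alpha + 1) + 2 * (alpha + 1)))). ring.
      apply is_series_scalR. apply A2; auto.
    - apply (is_series_eq_lim _ ((/ (beta * eta * eta) - 2 * x / eta) * (2 * s + alpha + 1))). ring.
      apply is_series_scalR. apply A1; auto.
    - apply is_series_scalR. apply A0; auto. }
  assert (Hexu : ex_series u).
  { apply (ex_series_le (V:=R_CompleteNormedModule) u v). intro n. exact (Huv n). eexists; exact Hv. }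
  assert (HSu : Rabs (Series u) <= eps * 1 + C * Tval alpha beta eta x).
  { apply Rle_trans with (Series (fun n => Rabs (u n))).
    - apply Series_Rabs. apply (ex_series_le (V:=R_CompleteNormedModule) _ v). intro n. change (Rabs (Rabs (u n)) <= v n).
      rewrite Rabs_Rabsolu. apply Huv. eexists; exact Hv.
    - rewrite <- (is_series_unique v _ Hv). apply Series_le.
      intro n. split. apply Rabs_pos. apply Huv. eexists; exact Hv. }
  assert (HaS : is_series (fun k => a (S k)) (1 - a 0%nat)).
  { apply is_series_incr_1. match goal with |- is_series _ ?l => replace l with 1 end.
    apply A0; auto. unfold plus; simpl. ring. }
  assert (HuS : is_series (fun k => u (S k)) (Series u - u 0%nat)).
  { apply is_series_incr_1. match goal with |- is_series _ ?l => replace l with (Series u) end.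
    apply Series_correct; auto. unfold plus; simpl. ring. }
  assert (HaJ : is_series (fun j => p_eta alpha eta (S j) x * int0inf (fun z => I_kernel beta eta (S j) z * Phi z))
                  ((Series u - u 0%nat) + Phi x * (1 - a 0%nat))).
  { apply (is_series_ext (fun j => u (S j) + Phi x * a (S j))).
    - intro j. rewrite Hpa. unfold u, J. toR. ring.
    - apply is_series_plusR; auto. apply is_series_scalR; auto. }
  unfold R_op. rewrite (is_series_unique _ _ HaJ). rewrite Hpa.
  replace (a 0%nat * Phi 0 + (Series u - u 0%nat + Phi x * (1 - a 0%nat)) - Phi x) with (Series u)
    by (unfold u; ring).
  lra.
Qed.

Lemma Tval_bound alpha beta eta x X : -1 < alpha -> 0 < beta -> 1 <= eta -> 0 <= x <= X ->
  eta * Tval alpha beta eta x <=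
  3 * X + ((alpha + 1) * (alpha + 1) + 2 * (alpha + 1)) + X / beta + (alpha + 1) / beta.
Proof.
  intros Ha Hb He Hx.
  assert (E : eta * Tval alpha beta eta x =
     3 * x + ((alpha + 1) * (alpha + 1) + 2 * (alpha + 1)) / eta + x / beta + (alpha + 1) / (beta * eta)).
  { unfold Tval. field. lra. }
  rewrite E.
  set (A := (alpha + 1) * (alpha + 1) + 2 * (alpha + 1)).
  assert (HA : 0 <= A) by (unfold A; nra).
  assert (H1 : A / eta <= A).
  { unfold Rdiv. rewrite <- (Rmult_1_r A) at 2. apply Rmult_le_compat_l; auto.
    rewrite <- Rinv_1. apply Rinv_le_contravar; lra. }
  assert (H2 : x / beta <= X / beta).
  { unfold Rdiv. apply Rmult_le_compat_r. left; apply Rinv_0_lt_compat; auto. lra. }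
  assert (H3 : (alpha + 1) / (beta * eta) <= (alpha + 1) / beta).
  { unfold Rdiv. apply Rmult_le_compat_l. lra. apply Rinv_le_contravar. lra. nra. }
  lra.
Qed.

Theorem mainTheorem4 (alpha beta : R) (Halpha : -1 < alpha) (Hbeta : 0 < beta)
  (Phi : R -> R)
  (Hcont : forall x, 0 <= x ->
     filterlim Phi (within (fun y => 0 <= y) (locally x)) (locally (Phi x)))
  (Hbdd : exists B, forall x, 0 <= x -> Rabs (Phi x) <= B) :
  forall K : R -> Prop, compact K -> (forall x, K x -> 0 <= x) ->
  forall eps, 0 < eps ->
  exists M, forall eta, M < eta -> forall x, K x ->
    Rabs (R_op alpha beta eta Phi x - Phi x) < eps.
Proof.
  intros K HK HK0 eps Heps.
  destruct Hbdd as [B HB].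
  destruct (compact_P1 K HK) as [m [M HmM]].
  set (X := Rmax M 0).
  assert (HX : 0 <= X) by apply Rmax_r.
  assert (HKX : forall x, K x -> 0 <= x <= X).
  { intros x Hx. split. apply HK0; auto. apply Rle_trans with M. apply HmM; auto. apply Rmax_l. }
  destruct (unif_bound Phi B X (eps / 3) Hcont HB HX ltac:(lra)) as [C [HC Hunif]].
  set (K1 := 3 * X + ((alpha + 1) * (alpha + 1) + 2 * (alpha + 1)) + X / beta + (alpha + 1) / beta).
  exists (Rmax 1 (3 * C * K1 / eps)).
  intros eta Heta x Hx.
  assert (He1 : 1 < eta) by (assert (H := Rmax_l 1 (3 * C * K1 / eps)); lra).
  assert (He2 : 3 * C * K1 / eps < eta) by (assert (H := Rmax_r 1 (3 * C * K1 / eps)); lra).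
  assert (Hxb := HKX x Hx).
  assert (Hmb := main_bound alpha beta Phi B (eps / 3) C eta x Halpha Hbeta ltac:(lra) ltac:(lra)
             (Phi_pcont Phi Hcont) HB HC ltac:(lra) (fun z Hz => Hunif x z Hxb Hz)).
  assert (HT := Tval_bound alpha beta eta x X Halpha Hbeta ltac:(lra) Hxb). fold K1 in HT.
  assert (HCK : C * K1 < eta * (eps / 3)).
  { apply (Rmult_lt_compat_r (eps / 3)) in He2; [|lra].
    replace (3 * C * K1 / eps * (eps / 3)) with (C * K1) in He2 by (field; lra). lra. }
  assert (HCT : C * Tval alpha beta eta x < eps / 3).
  { apply (Rmult_lt_reg_l eta). lra.
    apply Rle_lt_trans with (C * K1); [|lra].
    replace (eta * (C * Tval alpha beta eta x)) with (C * (eta * Tval alpha beta eta x)) by ring.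
    apply Rmult_le_compat_l; auto. }
  lra.
Qed.
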